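(* Let $G$ be an $m$-player $n_0$-action normal-form game with payoff tensors $M_1,\dots,M_m$, let $\epsilon>0$, and let $\mathcal{G}=\mathcal{G}(G)$ be the $(m+1)$-player Markov game described in the context. For any $i\in[m]$, any state $s$, any $h\in[H]$, and any product distribution $q$ over $\bar{\mathcal{A}}_{-i}:=\prod_{j\in[m+1]\setminus\{i\}}\mathcal{A}_j$, it holds that $\max_{a_i'\in\mathcal{A}_i}\mathbb{E}_{\mathbf{a}\sim q}[R_{i,h}(s,(a_i',\mathbf{a}))]\ge0$.
   Context: The Markov game $\mathcal{G}(G)$: horizon $H$ is the power of $2$ with $n_0\le H<2n_0$; players $1,\dots,m$ have action sets $\mathcal{A}_1=\dots=\mathcal{A}_m=[n_0]$; player $m+1$ (the ``kibitzer'') has action set $\mathcal{A}_{m+1}=\{(j,a_j): j\in[m],a_j\in\mathcal{A}_j\}$; $\bar{\mathcal{A}}=\prod_{j=1}^{m+1}\mathcal{A}_j$; there is a single state $\mathfrak{s}$. For $h\in[H]$ and action profile $\mathbf{a}=(a_1,\dots,a_{m+1})$ with $a_{m+1}=(j',a_{j'}')$, the reward to player $j\in[m+1]$ is $R_{j,h}(\mathfrak{s},\mathbf{a})=\bar R_{j,h}(\mathfrak{s},\mathbf{a})+\frac1H2^{-3\lceil\log(1/\epsilon)\rceil}\mathrm{enc}(\mathbf{a})$, where $\mathrm{enc}(\mathbf{a})=\sum_{k}2^{-k}b_k\in[0,1]$ for $(b_1,b_2,\dots)$ a binary encoding of $\mathbf{a}$, and $\bar R_{j,h}(\mathfrak{s},\mathbf{a})=0$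 if $j\notin\{j',m+1\}$; $\bar R_{j,h}(\mathfrak{s},\mathbf{a})=\frac1H\big((M_j)_{a_1,\dots,a_m}-(M_j)_{a_1,\dots,a_{j'}',\dots,a_m}\big)$ if $j=j'$; and $\bar R_{m+1,h}(\mathfrak{s},\mathbf{a})=\frac1H\big((M_{j'})_{a_1,\dots,a_{j'}',\dots,a_m}-(M_{j'})_{a_1,\dots,a_m}\big)$, where $(a_1,\dots,a_{j'}',\dots,a_m)$ denotes $(a_1,\dots,a_m)$ with the $j'$-th coordinate replaced by $a_{j'}'$. *)

(* Defs.v *)
From HB Require Import structures.
From mathcomp Require Import all_boot all_order all_algebra.
From mathcomp Require Import all_classical all_reals all_analysis.
Set Implicit Arguments. Unset Strict Implicit. Unset Printing Implicit Defensive.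
Import Order.TTheory GRing.Theory Num.Theory.
Local Open Scope ring_scope.

Definition jprof (m n0 : nat) := {ffun 'I_m -> 'I_n0}.
(* Kibitzer actions (j, a_j) with j in [m], a_j in A_j = [n0]. *)
Definition kact (m n0 : nat) := ('I_m * 'I_n0)%type.
Definition fprof (m n0 : nat) := (jprof m n0 * kact m n0)%type.

Definition repl m n0 (a : jprof m n0) (j : 'I_m) (b : 'I_n0) : jprof m n0 :=
  [ffun k => if k == j then b else a k].

(* Binary encoding of an action profile: the profile is coded by its rank
   c in the enumeration of the finite type of profiles, written with
   L = up_log 2 #|profiles| bits (b_1 most significant), and
   enc(a) = sum_k 2^{-k} b_k. *)
Definition enc_len m n0 : nat := up_log 2 #|{: fprof m n0}|.
Definition enc_bit m n0 (a : fprof m n0) (k : nat) : nat :=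
  odd ((enum_rank a : nat) %/ 2 ^ (enc_len m n0 - k)).
Definition enc {R : realType} m n0 (a : fprof m n0) : R :=
  \sum_(1 <= k < (enc_len m n0).+1) (enc_bit a k)%:R / 2 ^+ k.

Definition clog {R : realType} (eps : R) : int := Num.ceil (ln (eps^-1) / ln 2).

(* Players: Some j for j in [m], None for the kibitzer (player m+1).
   Payoff tensors M j : joint action of the m players -> R. *)
Definition barR {R : realType} m n0 (H : nat) (M : 'I_m -> jprof m n0 -> R)
    (j : option 'I_m) (a : fprof m n0) : R :=
  let: (x, (j', b)) := a in
  match j with
  | Some j => if j == j' then (H%:R)^-1 * (M j x - M j (repl x j' b)) else 0
  | None => (H%:R)^-1 * (M j' (repl x j' b) - M j' x)
  end.

Definition state := unit.

Definition reward {R : realType} m n0 (H : nat) (eps : R)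
    (M : 'I_m -> jprof m n0 -> R) (j : option 'I_m) (h : 'I_H) (s : state)
    (a : fprof m n0) : R :=
  barR H M j a + (H%:R)^-1 * (2 : R) ^ (- (3 * clog eps)) * enc a.

Definition is_dist {R : realType} (T : finType) (p : T -> R) : Prop :=
  (forall x, 0 <= p x) /\ \sum_x p x = 1.

(* Expectation of f over a ~ q, where q is the product distribution over
   A_{-i} = prod_{j in [m+1], j <> i} A_j with marginals p j (j <> i, j in [m])
   and pk (kibitzer), and player i plays ai. *)
Definition expect_dev {R : realType} m n0 (i : 'I_m) (p : 'I_m -> 'I_n0 -> R)
    (pk : kact m n0 -> R) (ai : 'I_n0) (f : fprof m n0 -> R) : R :=
  \sum_(x : jprof m n0 | x i == ai) \sum_(b : kact m n0)
     ((\prod_(j < m | j != i) p j (x j)) * pk b * f (x, b)).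

(* Main.v *)
Require Import Defs.
From HB Require Import structures.
From mathcomp Require Import all_boot all_order all_algebra.
From mathcomp Require Import all_classical all_reals all_analysis.
From mathcomp Require Import ring.
Import Order.TTheory GRing.Theory Num.Theory.
Local Open Scope ring_scope.

Lemma repl_repl m n0 (x : jprof m n0) i a b : repl (repl x i a) i b = repl x i b.
Proof. by apply/ffunP => k; rewrite !ffunE; case: eqP. Qed.

Lemma repl_eq m n0 (x : jprof m n0) i a : (repl x i a == x) = (x i == a).
Proof.
apply/eqP/eqP => [<-|e]; first by rewrite ffunE eqxx.
by apply/ffunP => k; rewrite ffunE; case: eqP => // ->.
Qed.

Lemma shift_sum (R : realType) m n0 (i : 'I_m) (p : 'I_m -> 'I_n0 -> R)
  (F : jprof m n0 -> R) a b :
  \sum_(x : jprof m n0 | x i == a) (\prod_(j < m | j != i) p j (x j)) * F (repl x i b)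
  = \sum_(x : jprof m n0 | x i == b) (\prod_(j < m | j != i) p j (x j)) * F x.
Proof.
symmetry; rewrite (reindex_onto (fun x => repl x i b) (fun x => repl x i a)) /=; last first.
  move=> x /eqP e; rewrite repl_repl; apply/eqP; rewrite repl_eq e //.
apply: eq_big => x.
  by rewrite repl_repl repl_eq /repl ffunE !eqxx.
move=> _; congr (_ * _); apply: eq_bigr => j hj; by rewrite /repl ffunE (negbTE hj).
Qed.

Theorem lemmaC8 (R : realType) (m n0 : nat) (M : 'I_m -> jprof m n0 -> R)
    (eps : R) (heps : 0 < eps) (H k : nat) (hH : H = (2 ^ k)%N)
    (hH1 : (n0 <= H)%N) (hH2 : (H < 2 * n0)%N)
    (i : 'I_m) (s : state) (h : 'I_H)
    (p : 'I_m -> 'I_n0 -> R) (pk : kact m n0 -> R)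
    (hp : forall j, j != i -> is_dist (p j)) (hpk : is_dist pk) :
  exists ai : 'I_n0,
    0 <= expect_dev i p pk ai (@reward R m n0 H eps M (Some i) h s).
Proof.
have n0pos : (0 < n0)%N by move: hH2; case: (n0) => //; rewrite muln0.
pose a0 : 'I_n0 := Ordinal n0pos.
pose W (x : jprof m n0) := \prod_(j < m | j != i) p j (x j).
pose U (a : 'I_n0) := \sum_(x : jprof m n0 | x i == a) W x * M i x.
have W0 : forall x, 0 <= W x.
  by move=> x; apply: prodr_ge0 => j hj; case: (hp j hj) => + _; apply.
have pk0 : forall b, 0 <= pk b by case: hpk.
case: (@arg_maxP _ R _ a0 xpredT U isT) => ai _ Hmax.
exists ai.
rewrite /expect_dev /reward.
under eq_bigr => x _ do under eq_bigr => b _ do rewrite mulrDr.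
under eq_bigr => x _ do rewrite big_split /=.
rewrite big_split /=.
apply: addr_ge0; last first.
  apply: sumr_ge0 => x _; apply: sumr_ge0 => b _.
  apply: mulr_ge0; first by apply: mulr_ge0; [apply: W0 | apply: pk0].
  apply: mulr_ge0; first apply: mulr_ge0.
  - by rewrite invr_ge0.
  - by apply: exprz_ge0.
  rewrite /enc; apply: sumr_ge0 => j _; apply: divr_ge0 => //.
set c := (H%:R)^-1 : R.
have c0 : 0 <= c by rewrite invr_ge0.
have E : forall x : jprof m n0,
   \sum_(b : kact m n0) W x * pk b * barR H M (Some i) (x, b)
   = \sum_(b' : 'I_n0) W x * pk (i, b') * (c * (M i x - M i (repl x i b'))).
  move=> x.
  transitivity (\sum_(j < m) \sum_(b' < n0) W x * pk (j, b') * barR H M (Some i) (x, (j, b'))).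
    by rewrite pair_big /=; apply: eq_bigr => -[j b'].
  rewrite (bigD1 i) //= [X in _ + X]big1 ?addr0; last first.
    move=> j hj; apply: big1 => b' _; rewrite /= eq_sym (negbTE hj); by rewrite mulr0.
  by apply: eq_bigr => b' _; rewrite /= eqxx.
rewrite (eq_bigr _ (fun x _ => E x)) exchange_big /=.
apply: sumr_ge0 => b' _.
have -> : \sum_(x : jprof m n0 | x i == ai) W x * pk (i, b') * (c * (M i x - M i (repl x i b')))
   = pk (i, b') * c * (U ai - \sum_(x : jprof m n0 | x i == ai) W x * M i (repl x i b')).
  rewrite /U mulrBr !mulr_sumr -sumrB; apply: eq_bigr => x _.
  ring.
have SS : \sum_(x : jprof m n0 | x i == ai) W x * M i (repl x i b') = U b'
  := @shift_sum R m n0 i p (M i) ai b'.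
rewrite SS.
apply: mulr_ge0; first exact: mulr_ge0.
rewrite subr_ge0; exact: (Hmax b' isT).
Qed.
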